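(* $R_{static}\le R^{go}_\infty\le R^{go}_B\le R^{go}_1\le R^{ub}$ for every $B\in\mathbb N$.
   Context: Let $\mathcal X$ be a finite set, $\Delta_{\mathcal X}$ the set of probability distributions on $\mathcal X$, and $\Delta_K$ the probability simplex on $[K]$. A bandit is $\nu=(\nu_a)_{a\in[K]}\in(\Delta_{\mathcal X})^K$, all arm distributions having full support on $\mathcal X$; $D$ is KL divergence. Let $\xi_1,\dots,\xi_K$ be pairwise disjoint nonempty compact sets of bandits, $\xi=\bigcup_i\xi_i$, $i^*(\nu)=i$ iff $\nu\in\xi_i$. For $B\in\mathbb N$, with sample paths $Q^B=(Q_1,\dots,Q_B)$, $Q_l=(Q_{l,a})_a\in(\Delta_{\mathcal X})^K$, $Q^l=(Q_1,\dots,Q_l)$, allocation rules $r^B=(r_1,\dots,r_B)$ with $r_l:((\Delta_{\mathcal X})^K)^l\to\Delta_K$ arbitrary, and decision rules $J:((\Delta_{\mathcal X})^K)^B\to[K]$ arbitrary, define $$R^{go}_B=\sup_{r^B,J}\inf_{Q^B}\inf_{\nu\in\xi:\,i^*(\nu)\ne J(Q^B)}\frac1B\sum_{l=1}^B\sum_{a}r_l(Q^l)(a)D(Q_{l,a}\|\nu_a),$$ and $R^{go}_\infty=\lim_{B\to\infty}R^{go}_B$ (this limit is known to exist and to equal $\inf_{B}R^{go}_B$). Define $$R_{static}=\sup_{w\in\Delta_K}\ \inf_{a\neq a'}\ \inf_{\nu\in\xi_a,\nu'\in\xi_{a'}}\ \max_{s\in[0,1]}\ -\sum_{b\in[K]}w_b\log\Big(\sum_{x\in\mathcal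 X}\nu'_b(x)^s\nu_b(x)^{1-s}\Big),$$ the Chernoff information $C(p,q)=\max_{s\in[0,1]}-\log\sum_{x}q(x)^sp(x)^{1-s}$, and $$R^{ub}=\inf_{a\neq a'}\ \inf_{\nu\in\xi_a,\nu'\in\xi_{a'}}\ \max_{b\in[K]}C(\nu_b,\nu'_b).$$ *)

(* Defs.v *)
From mathcomp Require Import all_boot all_order all_algebra.
From mathcomp Require Import all_classical all_reals all_analysis.
Set Implicit Arguments. Unset Strict Implicit. Unset Printing Implicit Defensive.
Import Order.TTheory GRing.Theory Num.Theory numFieldNormedType.Exports.
Local Open Scope classical_set_scope.
Local Open Scope ring_scope.

Definition is_dist (R : realType) (T : finType) (p : T -> R) : Prop :=
  (forall t, 0 <= p t) /\ \sum_(t : T) p t = 1.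

Definition is_bandit (R : realType) (K : nat) (X : finType)
  (nu : 'I_K -> X -> R) : Prop :=
  forall a, is_dist (nu a) /\ (forall x, 0 < nu a x).

(* Compactness of a set of bandits, in the (Euclidean = product) topology
   of ('I_K -> X -> R). *)
Definition bandit_compact (R : realType) (K : nat) (X : finType)
  (A : set ('I_K -> X -> R)) : Prop :=
  compact (A : set {ptws 'I_K -> {ptws X -> R}}).

(* KL divergence D(q || p) = sum_x q(x) log(q(x)/p(x)) (terms with q(x)=0 vanish). *)
Definition KL (R : realType) (X : finType) (q p : X -> R) : R :=
  \sum_(x : X) q x * ln (q x / p x).

Definition bhatt (R : realType) (X : finType) (s : R) (p q : X -> R) : R :=
  \sum_(x : X) (q x `^ s) * (p x `^ (1 - s)).

(* Chernoff information C(p,q) = max_{s in [0,1]} - log sum_x q(x)^s p(x)^(1-s)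
   (written as a supremum, which is attained). *)
Definition chernoff (R : realType) (X : finType) (p q : X -> R) : \bar R :=
  ereal_sup [set (- ln (bhatt s p q))%:E | s in [set s : R | 0 <= s <= 1]].

Definition R_static (R : realType) (K : nat) (X : finType)
  (xi : 'I_K -> set ('I_K -> X -> R)) : \bar R :=
  ereal_sup [set v | exists w : 'I_K -> R, is_dist w /\
    v = ereal_inf [set u | exists a a' : 'I_K, a != a' /\
      u = ereal_inf [set t | exists nu nu', xi a nu /\ xi a' nu' /\
        t = ereal_sup [set (- \sum_(b < K) w b * ln (bhatt s (nu b) (nu' b)))%:E
                      | s in [set s : R | 0 <= s <= 1]]]]].

Definition R_ub (R : realType) (K : nat) (X : finType)
  (xi : 'I_K -> set ('I_K -> X -> R)) : \bar R :=
  ereal_inf [set u | exists a a' : 'I_K, a != a' /\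
    u = ereal_inf [set t | exists nu nu', xi a nu /\ xi a' nu' /\
      t = ereal_sup [set chernoff (nu b) (nu' b) | b in [set: 'I_K]]]].

(* Sample paths Q^B = (Q_1,...,Q_B) (0-indexed by 'I_B), Q_l in (Delta_X)^K. *)
Definition is_path (R : realType) (K : nat) (X : finType) (B : nat)
  (Q : 'I_B -> 'I_K -> X -> R) : Prop :=
  forall l a, is_dist (Q l a).

(* Allocation rules r^B: r_l depends only on the prefix Q^l = (Q_j)_{j <= l}
   and takes values in Delta_K. (An arbitrary function of the prefix is the
   same thing as a function of the whole path depending only on the prefix.) *)
Definition is_alloc (R : realType) (K : nat) (X : finType) (B : nat)
  (r : 'I_B -> ('I_B -> 'I_K -> X -> R) -> 'I_K -> R) : Prop :=
  (forall l Q, is_dist (r l Q)) /\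
  (forall (l : 'I_B) Q Q', (forall j : 'I_B, (j <= l)%N -> Q j = Q' j) ->
     r l Q = r l Q').

Definition go_obj (R : realType) (K : nat) (X : finType) (B : nat)
  (r : 'I_B -> ('I_B -> 'I_K -> X -> R) -> 'I_K -> R)
  (Q : 'I_B -> 'I_K -> X -> R) (nu : 'I_K -> X -> R) : R :=
  B%:R^-1 * \sum_(l < B) \sum_(a < K) r l Q a * KL (Q l a) (nu a).

Definition R_go (R : realType) (K : nat) (X : finType)
  (xi : 'I_K -> set ('I_K -> X -> R)) (B : nat) : \bar R :=
  ereal_sup [set v | exists (r : 'I_B -> ('I_B -> 'I_K -> X -> R) -> 'I_K -> R)
      (J : ('I_B -> 'I_K -> X -> R) -> 'I_K), is_alloc r /\
    v = ereal_inf [set u | exists Q, is_path Q /\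
      u = ereal_inf [set (go_obj r Q nu)%:E
                    | nu in [set nu | exists i, i != J Q /\ xi i nu]]]].

Definition R_go_inf (R : realType) (K : nat) (X : finType)
  (xi : 'I_K -> set ('I_K -> X -> R)) : \bar R :=
  lim (R_go xi @ \oo).

(* Main.v *)
Require Import Defs.
From mathcomp Require Import all_boot all_order all_algebra.
From mathcomp Require Import all_classical all_reals all_analysis.
From mathcomp Require Import ring lra zify.
Import Order.TTheory GRing.Theory Num.Theory numFieldNormedType.Exports.
Local Open Scope classical_set_scope.
Local Open Scope ring_scope.
Set Implicit Arguments. Unset Strict Implicit. Unset Printing Implicit Defensive.
Lemma ln_le_sub1 (R : realType) (y : R) : 0 < y -> ln y <= y - 1.
Proof. move=> y0; have := expR_ge1Dx (ln y); rewrite lnK ?posrE //; lra. Qed.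

Lemma gibbs_term (R : realType) (q m Z : R) : 0 <= q -> 0 < m -> 0 < Z ->
  q - m / Z <= q * ln (q / m) + q * ln Z.
Proof.
move=> q0 m0 Z0; have [->|qp] := eqVneq q 0.
  rewrite !mul0r addr0 sub0r oppr_le0; apply: divr_ge0; exact: ltW.
have qp' : 0 < q by rewrite lt_def qp q0.
rewrite -mulrDr -lnM ?posrE ?divr_gt0 //.
have hy : 0 < m / (q * Z) by rewrite divr_gt0 // mulr_gt0.
have := ln_le_sub1 hy.
have -> : ln (m / (q * Z)) = - ln (q / m * Z).
  have e : m / (q * Z) = (q / m * Z)^-1 by field; rewrite ?gt_eqF.
  by rewrite e lnV // posrE mulr_gt0 ?divr_gt0.
move=> h.
have : q * (1 - m / (q * Z)) <= q * ln (q / m * Z) by rewrite ler_pM2l //; lra.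
have -> : q * (1 - m / (q * Z)) = q - m / Z by field; rewrite ?gt_eqF.
done.
Qed.

Lemma gibbs (R : realType) (X : finType) (q m : X -> R) :
  is_dist q -> (forall x, 0 < m x) ->
  - ln (\sum_x m x) <= \sum_x q x * ln (q x / m x).
Proof.
move=> [q0 q1] m0.
have Z0 : 0 < \sum_x m x.
  case: (pickP (@predT X)) => [x0 _|h].
    rewrite (bigD1 x0) //= ltr_pwDl // ?sumr_ge0 // => i _; exact: ltW.
  by move: q1; rewrite big_pred0 // => /eqP; rewrite eq_sym oner_eq0.
have : \sum_x (q x - m x / \sum_y m y) <= \sum_x (q x * ln (q x / m x) + q x * ln (\sum_y m y)).
  by apply: ler_sum => x _; exact: gibbs_term.
rewrite !big_split /= -big_distrl /= q1 mul1r sumrN -mulr_suml divff ?gt_eqF //.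
lra.
Qed.

Lemma mix_term (R : realType) (q a b s : R) : 0 <= q -> 0 < a -> 0 < b ->
  q * ln (q / (a `^ s * b `^ (1 - s))) = (1 - s) * (q * ln (q / b)) + s * (q * ln (q / a)).
Proof.
move=> q0 a0 b0; have [->|qp] := eqVneq q 0; first by rewrite !mul0r !mulr0 addr0.
have qp' : 0 < q by rewrite lt_def qp q0.
rewrite !ln_div ?posrE ?mulr_gt0 ?powR_gt0 // lnM ?posrE ?powR_gt0 // !ln_powR.
ring.
Qed.

Lemma gibbs_mix (R : realType) (X : finType) (q p p' : X -> R) (s : R) :
  is_dist q -> (forall x, 0 < p x) -> (forall x, 0 < p' x) ->
  - ln (bhatt s p p') <= (1 - s) * KL q p + s * KL q p'.
Proof.
move=> qd p0 p'0; rewrite /bhatt /KL.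
have := gibbs qd (fun x => mulr_gt0 (powR_gt0 s (p'0 x)) (powR_gt0 (1 - s) (p0 x))).
suff -> : \sum_x q x * ln (q x / (p' x `^ s * p x `^ (1 - s))) =
   (1 - s) * (\sum_x q x * ln (q x / p x)) + s * (\sum_x q x * ln (q x / p' x)) by [].
rewrite !mulr_sumr -big_split /=; apply: eq_bigr => x _.
by apply: mix_term => //; case: qd.
Qed.

Lemma KL_ge0 (R : realType) (X : finType) (q p : X -> R) :
  is_dist q -> is_dist p -> (forall x, 0 < p x) -> 0 <= KL q p.
Proof.
move=> qd [_ p1] p0; have := gibbs qd p0; by rewrite p1 ln1 oppr0.
Qed.

Lemma mix_obj (R : realType) (K : nat) (X : finType) (B : nat) (w : 'I_K -> R)
  (Q : 'I_B -> 'I_K -> X -> R) (nu nu' : 'I_K -> X -> R) (s : R) :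
  (0 < B)%N -> (forall a, 0 <= w a) -> is_path Q ->
  (forall a x, 0 < nu a x) -> (forall a x, 0 < nu' a x) ->
  - \sum_(b < K) w b * ln (bhatt s (nu b) (nu' b)) <=
  (1 - s) * go_obj (fun _ _ => w) Q nu + s * go_obj (fun _ _ => w) Q nu'.
Proof.
move=> B0 w0 PQ n0 n'0; rewrite /go_obj.
have Bp : (0 : R) < B%:R by rewrite ltr0n.
set c := - \sum_(b < K) _.
have -> : c = B%:R^-1 * \sum_(l < B) c.
  by rewrite sumr_const card_ord -[c *+ B]mulr_natr mulrC mulfK // gt_eqF.
have -> : \sum_(l < B) c = \sum_(l < B) \sum_(b < K) w b * (- ln (bhatt s (nu b) (nu' b))).
  by apply: eq_bigr => l _; rewrite /c -sumrN; apply: eq_bigr => b _; rewrite mulrN.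
rewrite mulrCA [s * _]mulrCA -mulrDr ler_pM2l ?invr_gt0 //.
rewrite !mulr_sumr -big_split /=; apply: ler_sum => l _.
rewrite !mulr_sumr -big_split /=; apply: ler_sum => b _.
rewrite mulrCA [s * (w b * _)]mulrCA -mulrDr; apply: ler_wpM2l => //.
exact: gibbs_mix.
Qed.
Lemma ex_argmin (R : realType) (K : nat) (f : 'I_K -> \bar R) (i0 : 'I_K) :
  exists j, forall i, (f j <= f i)%E.
Proof.
case: (@arg_minP _ _ _ i0 xpredT f erefl) => j _ h; by exists j => i; apply: h.
Qed.

Lemma mix_max (R : realType) (x y s : R) : 0 <= s <= 1 ->
  (1 - s) * x + s * y <= Num.max x y.
Proof.
move=> /andP[s0 s1]; rewrite le_max; apply/orP; have [h|h] := leP x y.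
  by right; nra.
by left; nra.
Qed.

Lemma static_le_go (R : realType) (K : nat) (X : finType)
  (xi : 'I_K -> set ('I_K -> X -> R))
  (xi_bandit : forall i nu, xi i nu -> is_bandit nu)
  (B : nat) (hB : (0 < B)%N) : (R_static xi <= R_go xi B)%E.
Proof.
apply: ge_ereal_sup => v [w [wd ->]].
have [i0 _] : exists i0 : 'I_K, true.
  case: K xi xi_bandit w wd => [|k] xi xi_bandit w [_ w1]; last by exists ord0.
  by move: w1; rewrite big_ord0 => /eqP; rewrite eq_sym oner_eq0.
pose r := fun (_ : 'I_B) (_ : 'I_B -> 'I_K -> X -> R) => w.
pose m := fun Q i => ereal_inf [set (go_obj r Q nu)%:E | nu in xi i].
pose J := fun Q => projT1 (cid (ex_argmin (m Q) i0)).
apply: le_ereal_sup_tmp.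
eexists; first by exists r, J; split; [split => // |].
apply: le_ereal_inf_tmp => _ [Q [PQ ->]].
apply: le_ereal_inf_tmp => _ [nu [i [iJ xinu]] <-].
rewrite leNgt; apply/negP => hlt.
have hJ := projT2 (cid (ex_argmin (m Q) i0)) i.
move: hlt; set V := ereal_inf _ => hlt.
have : (m Q (J Q) < V)%E.
  apply: le_lt_trans hJ _; apply: le_lt_trans _ hlt.
  by apply: ereal_inf_lbound; exists nu.
case/ereal_inf_lt => _ [nu' xinu' <-] hlt'.
have hV : (V <= ereal_sup [set (- \sum_(b < K) w b * ln (bhatt s (nu b) (nu' b)))%R%:E
                      | s in [set s : R | (0 <= s <= 1)%R]])%E.
  apply: le_trans (_ : V <= ereal_inf [set t | exists nu0 nu1, xi i nu0 /\ xi (J Q) nu1 /\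
        t = ereal_sup [set (- \sum_(b < K) w b * ln (bhatt s (nu0 b) (nu1 b)))%R%:E
                      | s in [set s : R | (0 <= s <= 1)%R]]])%E _.
    by apply: ereal_inf_lbound; exists i, (J Q).
  by apply: ereal_inf_lbound; exists nu, nu'.
have hS : (ereal_sup [set (- \sum_(b < K) w b * ln (bhatt s (nu b) (nu' b)))%R%:E
                      | s in [set s : R | (0 <= s <= 1)%R]] <=
           (Num.max (go_obj r Q nu) (go_obj r Q nu'))%:E)%E.
  apply: ge_ereal_sup => _ [s s01 <-]; rewrite lee_fin.
  apply: le_trans (mix_max _ _ s01).
  apply: mix_obj => //.
  - by move=> a; case: wd.
  - by move=> a x; case: (xi_bandit _ _ xinu a).
  - by move=> a x; case: (xi_bandit _ _ xinu' a).
have := le_trans hV hS; rewrite leNgt => /negP; apply.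
by rewrite EFin_max gt_max hlt hlt'.
Qed.


Lemma cont_sum (R : realType) (I : finType) (f : I -> R -> R) (x : R) :
  (forall i, {for x, continuous (f i)}) -> {for x, continuous (fun s => \sum_i f i s)}.
Proof.
move=> hf.
suff : forall r : seq I, {for x, continuous (fun s => \sum_(i <- r) f i s)} by apply.
elim => [|i r IH].
  have -> : (fun s => \sum_(i <- [::]) f i s) = (fun _ => 0) by apply: funext => s; rewrite big_nil.
  exact: cvg_cst.
have -> : (fun s => \sum_(j <- i :: r) f j s) = f i + (fun s => \sum_(j <- r) f j s).
  by apply: funext => s; rewrite big_cons.
exact: continuousD.
Qed.

Lemma cont_powR (R : realType) (a : R) : 0 < a -> continuous (fun s => a `^ s).
Proof.
move=> a0 x.
have -> : (fun s => a `^ s) = (expR \o (fun s => s * ln a)).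
  by apply: funext => s; rewrite /powR gt_eqF.
apply: continuous_comp; last exact: continuous_expR.
apply: continuousM; [exact: cvg_id | exact: cvg_cst].
Qed.

Lemma cont_powR1 (R : realType) (a : R) : 0 < a -> continuous (fun s : R => a `^ (1 - s)).
Proof.
move=> a0 x.
apply: (@continuous_comp _ _ _ (fun s : R => 1 - s) (fun s : R => a `^ s)); last exact: cont_powR.
apply: continuousB; [exact: cvg_cst | exact: cvg_id].
Qed.

Lemma ln_tilt (R : realType) (a b Z s : R) : 0 < a -> 0 < b -> 0 < Z ->
  ln (a `^ s * b `^ (1 - s) / Z / b) = s * (ln a - ln b) - ln Z /\
  ln (a `^ s * b `^ (1 - s) / Z / a) = - ((1 - s) * (ln a - ln b)) - ln Z.
Proof.
move=> a0 b0 Z0.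
have e0 : 0 < a `^ s * b `^ (1 - s) by rewrite mulr_gt0 ?powR_gt0.
rewrite !ln_div ?posrE ?divr_gt0 // lnM ?posrE ?powR_gt0 // !ln_powR.
split; ring.
Qed.

Lemma tilt (R : realType) (X : finType) (p p' : X -> R) :
  is_dist p -> is_dist p' -> (forall x, 0 < p x) -> (forall x, 0 < p' x) ->
  exists s, 0 <= s <= 1 /\ exists q, is_dist q /\
    KL q p = - ln (bhatt s p p') /\ KL q p' = - ln (bhatt s p p').
Proof.
move=> pd p'd p0 p'0.
pose e x s := p' x `^ s * p x `^ (1 - s).
have e0 : forall x s, 0 < e x s by move=> x s; rewrite mulr_gt0 ?powR_gt0.
have [x0 _] : exists x0 : X, true.
  case: (pickP (@predT X)) => [x0 _|h]; first by exists x0.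
  by case: pd => _; rewrite big_pred0 // => /eqP; rewrite eq_sym oner_eq0.
pose Z s := \sum_x e x s.
have Z0 : forall s, 0 < Z s.
  move=> s; rewrite /Z (bigD1 x0) //= ltr_pwDl // ?sumr_ge0 // => i _; exact: ltW.
pose d x := ln (p' x) - ln (p x).
pose h s := (\sum_x e x s * d x) * (Z s)^-1.
have econt : forall x, continuous (e x).
  move=> x t; apply: continuousM; [exact: cont_powR | exact: cont_powR1].
have hcont : continuous h.
  move=> t.
  have hN : {for t, continuous (fun s => \sum_x e x s * d x)}.
    apply: cont_sum => x; have -> : (fun s => e x s * d x) = (e x) \* (fun=> d x) by [].
    apply: continuousM; [exact: econt | exact: cvg_cst].
  have hZ : {for t, continuous (fun s => (Z s)^-1)}.
    apply: continuousV; first by rewrite gt_eqF.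
    by apply: cont_sum => x; exact: econt.
  exact: (continuousM hN hZ).
have eA : forall x, e x 0 = p x.
  by move=> x; rewrite /e powRr0 subr0 powRr1 ?mul1r // ltW.
have eB : forall x, e x 1 = p' x.
  by move=> x; rewrite /e powRr1 ?subrr ?powRr0 ?mulr1 // ltW.
have h0 : h 0 <= 0.
  rewrite /h.
  have -> : Z 0 = 1 by rewrite /Z (eq_bigr p) ?(proj2 pd) // => x _; exact: eA.
  have -> : \sum_x e x 0 * d x = - KL p p'.
    by rewrite /KL -sumrN; apply: eq_bigr => x _; rewrite eA /d ln_div ?posrE //; ring.
  by rewrite invr1 mulr1 oppr_le0; apply: KL_ge0.
have h1 : 0 <= h 1.
  rewrite /h.
  have -> : Z 1 = 1 by rewrite /Z (eq_bigr p') ?(proj2 p'd) // => x _; exact: eB.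
  have -> : \sum_x e x 1 * d x = KL p' p.
    by rewrite /KL; apply: eq_bigr => x _; rewrite eB /d ln_div ?posrE //.
  by rewrite invr1 mulr1; apply: KL_ge0.
have [s s01 hs] : exists2 s, s \in `[0, 1] & h s = 0.
  apply: IVT => //; first exact: continuous_subspaceT.
  by rewrite ge_min le_max h0 h1 orbT.
move: s01; rewrite in_itv /= => s01.
exists s; split => //.
exists (fun x => e x s / Z s); split.
  split; first by move=> x; rewrite divr_ge0 // ltW.
  by rewrite -mulr_suml; apply: mulfV; rewrite gt_eqF //; apply: Z0.
have hs' : \sum_x e x s / Z s * d x = 0.
  by transitivity (h s); last exact: hs; rewrite /h mulr_suml; apply: eq_bigr => x _; rewrite mulrAC.
have sq : \sum_x e x s / Z s = 1 by rewrite -mulr_suml; apply: mulfV; rewrite gt_eqF //; apply: Z0.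
split.
  rewrite /KL (eq_bigr (fun x => s * (e x s / Z s * d x) - ln (Z s) * (e x s / Z s))).
    by rewrite sumrB -!mulr_sumr hs' sq; rewrite /bhatt; ring.
  move=> x _; rewrite (proj1 (ln_tilt s (p'0 x) (p0 x) (Z0 s))) /d; ring.
rewrite /KL (eq_bigr (fun x => - (1 - s) * (e x s / Z s * d x) - ln (Z s) * (e x s / Z s))).
  by rewrite sumrB -!mulr_sumr hs' sq; rewrite /bhatt; ring.
move=> x _; rewrite (proj2 (ln_tilt s (p'0 x) (p0 x) (Z0 s))) /d; ring.
Qed.

Lemma modn_inj_block (a b m : nat) : (0 < m)%N -> (b < a + m)%N -> (a < b + m)%N ->
  (a %% m = b %% m)%N -> a = b.
Proof.
move=> m0 h1 h2 hm.
have ea := divn_eq a m; have eb := divn_eq b m.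
rewrite hm in ea.
have hq : (a %/ m)%N = (b %/ m)%N.
  move: (a %/ m)%N (b %/ m)%N ea eb => qa qb ea eb.
  have : (qb * m < qa.+1 * m)%N by rewrite mulSnr; lia.
  have : (qa * m < qb.+1 * m)%N by rewrite mulSnr; lia.
  rewrite !ltn_pmul2r // => *; lia.
by rewrite (divn_eq a m) (divn_eq b m) hq hm.
Qed.

Lemma inf_le_scale (R : realType) (S S' : set (\bar R)) (c : R) : 0 < c ->
  (forall y, S' y -> exists2 x, S x & (x <= c%:E * y)%E) ->
  (ereal_inf S <= c%:E * ereal_inf S')%E.
Proof.
move=> c0 H; rewrite -ereal_inf_pZl //; apply: le_ereal_inf_tmp => _ [y Sy <-].
have [x Sx h] := H y Sy; exact: le_trans (ereal_inf_lbound Sx) h.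
Qed.

Lemma card_block (n B mm : nat) (s : 'I_n -> 'I_B) (l : 'I_B) : (0 < mm)%N ->
  (forall j1 j2 : 'I_n, s j1 = s j2 -> (j2 < j1 + mm)%N) ->
  (#|[pred j | s j == l]| <= mm)%N.
Proof.
move=> mm0 hd.
have := @leq_card_in _ _ (fun j : 'I_n => Ordinal (ltn_pmod j mm0)) [pred j | s j == l].
rewrite card_ord; apply => j1 j2; rewrite !inE => /eqP h1 /eqP h2 [] hm.
apply: val_inj; apply: (modn_inj_block mm0 _ _ hm).
  by apply: hd; rewrite h1 h2.
by apply: hd; rewrite h1 h2.
Qed.

Lemma go_stretch (R : realType) (K : nat) (X : finType)
  (xi : 'I_K -> set ('I_K -> X -> R))
  (xi_bandit : forall i nu, xi i nu -> is_bandit nu)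
  (B n mm : nat) (s : 'I_n -> 'I_B) :
  (0 < n)%N -> (0 < B)%N -> (0 < mm)%N ->
  (forall j1 j2 : 'I_n, (j1 <= j2)%N -> (s j1 <= s j2)%N) ->
  (forall l : 'I_B, exists j, s j = l) ->
  (forall j1 j2 : 'I_n, s j1 = s j2 -> (j2 < j1 + mm)%N) ->
  (R_go xi n <= (mm%:R * B%:R / n%:R)%:E * R_go xi B)%E.
Proof.
move=> n0 B0 mm0 smono ssurj sdiam.
have c0 : 0 < mm%:R * B%:R / n%:R :> R by rewrite !mulr_gt0 ?invr_gt0 ?ltr0n.
apply: ge_ereal_sup => _ [r' [J' [[r'd r'pre] ->]]].
pose sQ (Q : 'I_B -> 'I_K -> X -> R) : 'I_n -> 'I_K -> X -> R := fun j => Q (s j).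
pose cnt (l : 'I_B) : R := (#|[pred j | s j == l]|)%:R.
have cnt0 : forall l, 0 < cnt l.
  move=> l; rewrite /cnt ltr0n; have [j hj] := ssurj l.
  by apply/card_gt0P; exists j; rewrite inE hj.
have cntm : forall l, cnt l <= mm%:R.
  by move=> l; rewrite /cnt ler_nat; apply: card_block.
have sum1 : forall l, \sum_(j | s j == l) (1 : R) = cnt l.
  by move=> l; rewrite sumr_const.
pose r (l : 'I_B) (Q : 'I_B -> 'I_K -> X -> R) : 'I_K -> R :=
  fun a => (cnt l)^-1 * \sum_(j | s j == l) r' j (sQ Q) a.
pose J Q := J' (sQ Q).
have rd : is_alloc r.
  split.
    move=> l Q; split.
      move=> a; rewrite /r; apply: mulr_ge0; first by rewrite invr_ge0 ltW.
      by apply: sumr_ge0 => j _; case: (r'd j (sQ Q)).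
    rewrite /r -mulr_sumr exchange_big /=.
    rewrite (eq_bigr (fun _ => 1)) ?sum1 ?mulVf ?gt_eqF //.
    by move=> j _; case: (r'd j (sQ Q)).
  move=> l Q Q' hQ; apply: funext => a; rewrite /r; congr (_ * _).
  apply: eq_bigr => j /eqP hj; rewrite (r'pre j (sQ Q) (sQ Q')) //.
  move=> i hi; rewrite /sQ; apply: hQ.
  by rewrite -hj; apply: smono.
have hle : (ereal_inf [set u | exists Q, is_path Q /\
      u = ereal_inf [set (go_obj r' Q nu)%:E
                    | nu in [set nu | exists i, i != J' Q /\ xi i nu]]] <=
    (mm%:R * B%:R / n%:R)%:E * ereal_inf [set u | exists Q, is_path Q /\
      u = ereal_inf [set (go_obj r Q nu)%:E
                    | nu in [set nu | exists i, i != J Q /\ xi i nu]]])%E.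
  apply: inf_le_scale => // _ [Q [PQ ->]].
  exists (ereal_inf [set (go_obj r' (sQ Q) nu)%:E
                    | nu in [set nu | exists i, i != J' (sQ Q) /\ xi i nu]]).
    by exists (sQ Q); split => // j a; apply: PQ.
  apply: inf_le_scale => // _ [nu Nnu <-].
  exists (go_obj r' (sQ Q) nu)%:E; first by exists nu.
  rewrite -EFinM lee_fin.
  have [i0 [_ xnu]] := Nnu.
  have Kge : forall l a, 0 <= KL (Q l a) (nu a).
    move=> l a; have [nd np] := xi_bandit _ _ xnu a; exact: KL_ge0.
  have Tge : forall l, 0 <= \sum_a r l Q a * KL (Q l a) (nu a).
    move=> l; apply: sumr_ge0 => a _; apply: mulr_ge0 => //.
    by case: (rd.1 l Q).
  rewrite /go_obj.
  have -> : \sum_(j < n) \sum_a r' j (sQ Q) a * KL (sQ Q j a) (nu a) =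
      \sum_(l < B) cnt l * \sum_a r l Q a * KL (Q l a) (nu a).
    rewrite (partition_big s xpredT) //=; apply: eq_bigr => l _.
    rewrite /r.
    under [in RHS]eq_bigr do rewrite -mulrA mulr_suml.
    rewrite -mulr_sumr mulVKf ?gt_eqF //.
    rewrite [RHS]exchange_big /=; apply: eq_bigr => j /eqP hj; apply: eq_bigr => a _.
    by rewrite /sQ hj.
  have -> : mm%:R * B%:R / n%:R * (B%:R^-1 * \sum_(l < B) \sum_a r l Q a * KL (Q l a) (nu a)) =
      n%:R^-1 * \sum_(l < B) mm%:R * \sum_a r l Q a * KL (Q l a) (nu a).
    rewrite -mulr_sumr; field; rewrite ?pnatr_eq0 -?lt0n //.
  by rewrite n0 B0.
  rewrite ler_pM2l ?invr_gt0 ?ltr0n //; apply: ler_sum => l _.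
  by apply: ler_wpM2r.
apply: le_trans hle _; apply: lee_wpmul2l; first by rewrite lee_fin ltW.
by apply: ereal_sup_ubound; exists r, J.
Qed.


Lemma convex_le (R : realType) (K : nat) (w c : 'I_K -> R) (M : \bar R) :
  is_dist w -> (forall b, ((c b)%:E <= M)%E) -> ((\sum_b w b * c b)%:E <= M)%E.
Proof.
move=> [w0 w1] h; case: M h => [m||] h.
- rewrite lee_fin; apply: le_trans (_ : \sum_b w b * m <= m).
    by apply: ler_sum => b _; apply: ler_wpM2l => //; rewrite -lee_fin.
  by rewrite -mulr_suml w1 mul1r.
- exact: leey.
- case: K w c w0 w1 h => [|k] w c w0 w1 h.
    by move: w1; rewrite big_ord0 => /eqP; rewrite eq_sym oner_eq0.
  by have := h ord0; rewrite leeNy_eq.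
Qed.

Lemma go1_le_ub (R : realType) (K : nat) (X : finType)
  (xi : 'I_K -> set ('I_K -> X -> R))
  (xi_bandit : forall i nu, xi i nu -> is_bandit nu) :
  (R_go xi 1 <= R_ub xi)%E.
Proof.
apply: le_ereal_inf_tmp => _ [a [a' [aa' ->]]].
apply: le_ereal_inf_tmp => _ [nu [nu' [xa [xa' ->]]]].
set M := ereal_sup _.
have hb := xi_bandit _ _ xa; have hb' := xi_bandit _ _ xa'.
pose P := fun (b : 'I_K) (f : R * (X -> R)) => 0 <= f.1 <= 1 /\
    is_dist f.2 /\ KL f.2 (nu b) = - ln (bhatt f.1 (nu b) (nu' b)) /\
    KL f.2 (nu' b) = - ln (bhatt f.1 (nu b) (nu' b)).
have [sq hsq] : {f : 'I_K -> R * (X -> R) & forall b, P b (f b)}.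
  apply: choice => b.
  have [s [s01 [q [qd [h1 h2]]]]] := tilt (proj1 (hb b)) (proj1 (hb' b)) (proj2 (hb b)) (proj2 (hb' b)).
  by exists (s, q).
have cM : forall b, ((- ln (bhatt (sq b).1 (nu b) (nu' b)))%:E <= M)%E.
  move=> b.
  have h1 : ((- ln (bhatt (sq b).1 (nu b) (nu' b)))%:E <= Defs.chernoff (nu b) (nu' b))%E.
    by apply: ereal_sup_ubound; exists (sq b).1 => //; case: (hsq b).
  have h2 : (Defs.chernoff (nu b) (nu' b) <= M)%E by apply: ereal_sup_ubound; exists b.
  exact: le_trans h1 h2.
apply: ge_ereal_sup => _ [r [J [ra ->]]].
pose Q : 'I_1 -> 'I_K -> X -> R := fun _ b => (sq b).2.
have hQ : (ereal_inf [set u | exists Q, is_path Q /\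
      u = ereal_inf [set (go_obj r Q nu0)%:E
                    | nu0 in [set nu0 | exists i, i != J Q /\ xi i nu0]]] <=
   ereal_inf [set (go_obj r Q nu0)%:E
                    | nu0 in [set nu0 | exists i, i != J Q /\ xi i nu0]])%E.
  by apply: ereal_inf_lbound; exists Q; split => // l b; case: (hsq b) => _ [].
apply: le_trans hQ _.
have gb : forall nu0, (nu0 = nu \/ nu0 = nu') ->
    (go_obj r Q nu0 = \sum_b r ord0 Q b * - ln (bhatt (sq b).1 (nu b) (nu' b))).
  move=> nu0 hnu; rewrite /go_obj big_ord1 invr1 mul1r; apply: eq_bigr => b _.
  by case: (hsq b) => _ [_ [e1 e2]]; case: hnu => ->; rewrite ?e1 ?e2.
have [hJ|hJ] := eqVneq (J Q) a.
  apply: ge_ereal_inf; exists (go_obj r Q nu')%:E.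
    by exists nu' => //; exists a'; split => //; rewrite hJ eq_sym.
  rewrite gb; last by right.
  by apply: convex_le => //; exact: (proj1 ra ord0 Q).
apply: ge_ereal_inf; exists (go_obj r Q nu)%:E.
  by exists nu => //; exists a; split => //; rewrite eq_sym.
rewrite gb; last by left.
by apply: convex_le => //; exact: (proj1 ra ord0 Q).
Qed.


Lemma seq_conv (R : realType) (u : nat -> \bar R) :
  (forall n, (0 < n)%N -> (0 <= u n)%E) ->
  (forall n, (0 < n)%N -> (u n <= u 1%N)%E) ->
  (u 1%N < +oo)%E ->
  (forall B n, (0 < B)%N -> (B <= n)%N ->
     (u n <= (((n %/ B + B)%N)%:R * B%:R / n%:R)%:E * u B)%E) ->
  u @ \oo --> ereal_inf [set u n | n in [set n | (0 < n)%N]].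
Proof.
move=> u0 u1 u1fin ust.
set L := ereal_inf _.
have ufin : forall n, (0 < n)%N -> u n \is a fin_num.
  move=> n n0; rewrite ge0_fin_numE ?u0 //; exact: le_lt_trans (u1 n n0) u1fin.
have L0 : (0 <= L)%E by apply: le_ereal_inf_tmp => _ [n n0 <-]; apply: u0.
have Lfin : L \is a fin_num.
  rewrite ge0_fin_numE //; apply: le_lt_trans u1fin.
  by apply: ereal_inf_lbound; exists 1%N.
rewrite -(fineK Lfin); apply/fine_cvgP; split.
  by exists 1%N => // n /= n0; apply: ufin.
apply/cvgrPdist_lt => e e0.
have : (L < (fine L + e / 2)%:E)%E.
  by rewrite -{1}(fineK Lfin) lte_fin ltrDl divr_gt0.
case/ereal_inf_lt => _ [B0 B00 <-] hB0.
have uBfin := ufin B0 B00.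
set uB := fine (u B0).
have uB0 : 0 <= uB by rewrite /uB fine_ge0 ?u0.
move: hB0; rewrite -(fineK uBfin) lte_fin -/uB => hB0.
pose N := maxn B0 (Num.bound (2 * B0%:R ^+ 2 * uB / e)).
exists N => // n /= hn.
have nB0 : (B0 <= n)%N by apply: leq_trans hn; apply: leq_maxl.
have n0 : (0 < n)%N by apply: leq_trans nB0.
have hb : 2 * B0%:R ^+ 2 * uB / e < n%:R :> R.
  apply: lt_le_trans (archi_boundP _) _; first by rewrite divr_ge0 ?mulr_ge0 // ltW.
  by rewrite ler_nat; apply: leq_trans hn; apply: leq_maxr.
have := ust B0 n B00 nB0.
rewrite -(fineK (ufin n n0)) -(fineK uBfin) -EFinM lee_fin -/uB.
set un := fine (u n) => hun.
have Lun : fine L <= un.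
  rewrite -lee_fin (fineK Lfin) /un (fineK (ufin n n0)).
  by apply: ereal_inf_lbound; exists n.
have npos : 0 < n%:R :> R by rewrite ltr0n.
have kB : ((n %/ B0) * B0 <= n)%N by apply: leq_trunc_div.
have kBr : (n %/ B0)%N%:R * B0%:R <= n%:R :> R by rewrite -natrM ler_nat.
have c1 : ((n %/ B0 + B0)%N)%:R * B0%:R / n%:R * uB <= uB + B0%:R ^+ 2 * uB / n%:R.
  rewrite natrD mulrDl mulrDl mulrDl.
  have : (n %/ B0)%N%:R * B0%:R / n%:R <= 1 :> R by rewrite ler_pdivrMr // mul1r.
  move=> h; rewrite expr2; apply: lerD; last by rewrite mulrAC.
  by rewrite -[X in _ <= X]mul1r; apply: ler_wpM2r.
have c2 : B0%:R ^+ 2 * uB / n%:R < e / 2.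
  rewrite ltr_pdivrMr //; move: hb; rewrite ltr_pdivrMr // => hb; lra.
rewrite /= distrC ger0_norm ?subr_ge0 //.
have : un < fine L + e.
  apply: (le_lt_trans hun); apply: (le_lt_trans c1); lra.
lra.
Qed.


Lemma blk_lt (B k j : nat) : (0 < B)%N -> (minn (j %/ k) B.-1 < B)%N.
Proof. move=> B0; move: (j %/ k)%N => q; lia. Qed.

Lemma stretch_gen (R : realType) (K : nat) (X : finType)
  (xi : 'I_K -> set ('I_K -> X -> R))
  (xi_bandit : forall i nu, xi i nu -> is_bandit nu) (B n : nat) :
  (0 < B)%N -> (B <= n)%N ->
  (R_go xi n <= (((n %/ B + B)%N)%:R * B%:R / n%:R)%:E * R_go xi B)%E.
Proof.
move=> B0 Bn.
have n0 : (0 < n)%N by apply: leq_trans Bn.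
set k := (n %/ B)%N.
have k0 : (0 < k)%N by rewrite divn_gt0.
have kB : (k * B <= n)%N by apply: leq_trunc_div.
have nk : (n < k.+1 * B)%N by apply: ltn_ceil.
pose s (j : 'I_n) : 'I_B := Ordinal (blk_lt k j B0).
have fj : forall j : nat, (j %/ k * k <= j /\ j < (j %/ k).+1 * k)%N.
  by move=> j; split; [apply: leq_trunc_div | apply: ltn_ceil].
apply: (@go_stretch R K X xi xi_bandit B n (k + B) s) => //.
- by rewrite addn_gt0 B0 orbT.
- move=> j1 j2 h; rewrite /s /=.
  have := leq_div2r k h; move: (j1 %/ k)%N (j2 %/ k)%N => q1 q2; lia.
- move=> l; have lB := ltn_ord l.
  have lkn : (l * k < n)%N by nia.
  exists (Ordinal lkn); apply: val_inj; rewrite /= mulnK //; lia.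
- move=> j1 j2 /(congr1 val) /= h.
  have jn1 := ltn_ord j1; have jn2 := ltn_ord j2.
  have [a1 b1] := fj j1; have [a2 b2] := fj j2.
  move: h a1 b1 a2 b2; move: (j1 %/ k)%N (j2 %/ k)%N => q1 q2 h a1 b1 a2 b2.
  move: (nat_of_ord j1) (nat_of_ord j2) jn1 jn2 h a1 b1 a2 b2 => x1 x2.
  nia.
Qed.


Lemma go_le_go1 (R : realType) (K : nat) (X : finType)
  (xi : 'I_K -> set ('I_K -> X -> R))
  (xi_bandit : forall i nu, xi i nu -> is_bandit nu) (n : nat) :
  (0 < n)%N -> (R_go xi n <= R_go xi 1)%E.
Proof.
move=> n0.
have := @go_stretch R K X xi xi_bandit 1 n n (fun _ => ord0) n0 erefl n0.
rewrite mulr1 divff ?pnatr_eq0 -?lt0n // mul1e; apply => //.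
- by move=> l; exists (Ordinal n0); apply: val_inj; rewrite /= (ord1 l).
- by move=> j1 j2 _; rewrite ltn_addl.
Qed.

Lemma go_ge0 (R : realType) (K : nat) (X : finType)
  (xi : 'I_K -> set ('I_K -> X -> R))
  (xi_bandit : forall i nu, xi i nu -> is_bandit nu) (n : nat) (i0 : 'I_K) :
  (0 <= R_go xi n)%E.
Proof.
have K0 : (0 < K)%N by apply: leq_ltn_trans (ltn_ord i0).
pose r := fun (_ : 'I_n) (_ : 'I_n -> 'I_K -> X -> R) (_ : 'I_K) => (K%:R : R)^-1.
apply: le_ereal_sup_tmp; eexists.
  exists r, (fun _ => i0); split; last by reflexivity.
  split => // l Q; split => [a|]; first by rewrite invr_ge0 ler0n.
  by rewrite sumr_const card_ord -[_ *+ K]mulr_natr mulVf // pnatr_eq0 -lt0n.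
apply: le_ereal_inf_tmp => _ [Q [PQ ->]].
apply: le_ereal_inf_tmp => _ [nu [i [_ xnu]] <-].
rewrite lee_fin /go_obj mulr_ge0 ?invr_ge0 ?ler0n //.
apply: sumr_ge0 => l _; apply: sumr_ge0 => a _; apply: mulr_ge0.
  by rewrite invr_ge0 ler0n.
by have [nd np] := xi_bandit _ _ xnu a; apply: KL_ge0.
Qed.

Lemma KL_self (R : realType) (X : finType) (p : X -> R) :
  (forall x, 0 < p x) -> KL p p = 0.
Proof.
move=> p0; rewrite /KL big1 // => x _; rewrite divff ?gt_eqF // ln1 mulr0 //.
Qed.

Lemma chernoff_le_KL (R : realType) (X : finType) (p p' : X -> R) :
  is_dist p -> (forall x, 0 < p x) -> (forall x, 0 < p' x) -> is_dist p' ->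
  (Defs.chernoff p p' <= (KL p p')%:E)%E.
Proof.
move=> pd p0 p'0 p'd; apply: ge_ereal_sup => _ [s /andP[s0 s1] <-]; rewrite lee_fin.
apply: le_trans (gibbs_mix s pd p0 p'0) _.
rewrite KL_self // mulr0 add0r.
have := KL_ge0 pd p'd p'0; nra.
Qed.

Lemma ub_fin (R : realType) (k : nat) (X : finType)
  (xi : 'I_k.+2 -> set ('I_k.+2 -> X -> R))
  (xi_bandit : forall i nu, xi i nu -> is_bandit nu)
  (xi_nonempty : forall i, xi i !=set0) : (R_ub xi < +oo)%E.
Proof.
have [nu0 x0] := xi_nonempty ord0.
have [nu1 x1] := xi_nonempty ord_max.
apply: le_lt_trans (_ : (_ <= (\sum_b KL (nu0 b) (nu1 b))%:E)%E) _; last exact: ltey.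
apply: ge_ereal_inf; eexists.
  by exists ord0, ord_max; split; [by [] | reflexivity].
apply: ge_ereal_inf; eexists.
  by exists nu0, nu1; split; [by [] | split; [by [] | reflexivity]].
apply: ge_ereal_sup => _ [b _ <-].
have [d0 p0] := xi_bandit _ _ x0 b; have [d1 p1] := xi_bandit _ _ x1 b.
apply: le_trans (chernoff_le_KL d0 p0 p1 d1) _; rewrite lee_fin.
rewrite (bigD1 b) //= lerDl; apply: sumr_ge0 => c _.
have [d0' p0'] := xi_bandit _ _ x0 c; have [d1' p1'] := xi_bandit _ _ x1 c.
exact: KL_ge0.
Qed.

Lemma conv_main (R : realType) (K : nat) (X : finType)
  (xi : 'I_K -> set ('I_K -> X -> R))
  (xi_bandit : forall i nu, xi i nu -> is_bandit nu)
  (xi_nonempty : forall i, xi i !=set0) :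
  R_go xi @ \oo --> ereal_inf [set R_go xi n | n in [set n | (0 < n)%N]].
Proof.
case: K xi xi_bandit xi_nonempty => [|[|k]] xi xi_bandit xi_nonempty;
set L := ereal_inf _;
(have LB : forall n, (0 < n)%N -> (L <= R_go xi n)%E by
  move=> n n0; apply: ereal_inf_lbound; exists n).
- have hm : forall n, R_go xi n = -oo%E.
    move=> n; apply/ereal_sup_ninfty => y [r [J _]].
    by case: (J (fun _ _ _ => 0)).
  have hL : L = -oo%E by apply/eqP; rewrite -leeNy_eq -(hm 1%N); apply: LB.
  by apply: cvg_near_cst; exists 0%N => // n _; rewrite hm hL.
- have hs : R_static xi = +oo%E.
    apply/eqP; rewrite eq_le leey /=; apply: le_ereal_sup_tmp.
    exists +oo%E => //; exists (fun _ => 1); split.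
      by split => //; rewrite big_ord1.
    symmetry; apply/ereal_inf_pinfty => y [a [a' [aa' _]]].
    by move: aa'; rewrite (ord1 a) (ord1 a').
  have hp : forall n, (0 < n)%N -> R_go xi n = +oo%E.
    move=> n n0; apply/eqP; rewrite eq_le leey /= -hs.
    exact: static_le_go.
  have hL : L = +oo%E.
    by rewrite /L; apply/ereal_inf_pinfty => y [n n0 <-]; rewrite hp.
  by apply: cvg_near_cst; exists 1%N => // n n0; rewrite hp // hL.
- apply: seq_conv.
  + by move=> n _; apply: (go_ge0 xi_bandit n ord0).
  + by move=> n n0; apply: go_le_go1.
  + apply: le_lt_trans (go1_le_ub xi_bandit) _; exact: ub_fin.
  + by move=> B n B0 Bn; apply: stretch_gen.
Qed.

Unset Implicit Arguments.
Theorem mainTheorem2 (R : realType) (K : nat) (X : finType)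
  (xi : 'I_K -> set ('I_K -> X -> R))
  (xi_bandit : forall i nu, xi i nu -> is_bandit nu)
  (xi_nonempty : forall i, xi i !=set0)
  (xi_compact : forall i, bandit_compact (xi i))
  (xi_disj : forall i j, i != j -> xi i `&` xi j = set0)
  (B : nat) (hB : (0 < B)%N) :
  (R_static xi <= R_go_inf xi <= R_go xi B)%E /\
  (R_go xi B <= R_go xi 1 <= R_ub xi)%E.
Proof.
have hinf : R_go_inf xi = ereal_inf [set R_go xi n | n in [set n | (0 < n)%N]].
  by rewrite /R_go_inf; apply: cvg_lim => //; apply: conv_main.
rewrite hinf; split; apply/andP; split.
- by apply: le_ereal_inf_tmp => _ [n n0 <-]; apply: static_le_go.
- by apply: ereal_inf_lbound; exists B.
- exact: go_le_go1.
- exact: go1_le_ub.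
Qed.
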